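(* Let $(M,\hat J,\hat\theta)$ be a pseudohermitian submanifold of $H_n$ of CR dimension $m$ with fundamental vector field $\nu$, and let $(e_1,\dots,e_{2n})$ be a Darboux frame over an open set $U\subset M$ with dual forms $\omega^1,\dots,\omega^{2n},\Theta$. Let $\hat e_j=e_j$, $\hat e_{m+j}=e_{n+j}$ ($1\le j\le m$), $\hat T=T+\nu$, and let $\{\hat\omega^1,\dots,\hat\omega^{2m},\hat\theta\}$ be the coframe on $U$ dual to $\{\hat e_1,\dots,\hat e_{2m},\hat T\}$. Then, for $1\le j\le m$ and $m+1\le a\le n$, $$\omega^j|_M=\hat\omega^j,\quad \omega^{n+j}|_M=\hat\omega^{m+j},\quad \omega^a|_M=\tfrac12\langle\nu,e_a\rangle\hat\theta,\quad \omega^{n+a}|_M=\tfrac12\langle\nu,e_{n+a}\rangle\hat\theta,$$ and hence, with $\theta^\beta=\omega^\beta+i\omega^{n+\beta}$, $\hat\theta^j=\hat\omega^j+i\hat\omega^{m+j}$ and $Z_a=\frac12(e_a-ie_{n+a})$, $$\theta^j|_M=\hat\theta^j,\qquad \theta^a|_M=\langle\nu,Z_a\rangle\hat\theta.$$ In particular, if $\nu=0$ then $\theta^a|_M=0$.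
   Context: $H_n$ is $\mathbb{R}^{2n+1}$ with coordinates $(x,y,t)$, $\Theta=dt+\sum_\beta(x_\beta dy_\beta-y_\beta dx_\beta)$, $\xi=\ker\Theta$ spanned by $\mathring e_\beta=\partial_{x_\beta}+y_\beta\partial_t$, $\mathring e_{n+\beta}=\partial_{y_\beta}-x_\beta\partial_t$; $J\mathring e_\beta=\mathring e_{n+\beta}$, $J\mathring e_{n+\beta}=-\mathring e_\beta$; $T=\partial_t$. The adapted metric makes $\mathring e_1,\dots,\mathring e_{2n},T$ orthonormal. The Levi metric on $\xi$ is $\langle X,Y\rangle=d\Theta(X,JY)$, extended to $\xi\otimes\mathbb C$ as a Hermitian form (complex-linear in the first slot, conjugate-linear in the second). A pseudohermitian submanifold of CR dimension $m$ is a $(2m+1)$-dimensional submanifold $M$ with $\hat\xi=TM\cap\xi$ of rank $2m$, $J$-invariant, and $(M,\hat J=J|_{\hat\xi},\hat\theta=\Theta|_M)$ pseudohermitian with $\ker\hat\theta=\hat\xi$. $\hat\xi^\perp$ is the orthogonal complement of $\hat\xi$ in $\xi|_M$; the fundamental vector field $\nu$ is the unique section of $\hat\xi^\perp$ with $T+\nu$ tangent to $M$. Indices: $1\le j\le m$, $m+1\le a\le n$, $1\le\beta\le n$. A Darboux frame over $U\subset M$ is a family of sections $e_1,\dots,e_{2n}$ of $\xi$ along $U$, orthonormal for the adapted metric, with $e_{n+\beta}=Je_\beta$, $e_j\in\hat\xi$, $e_a\in\hat\xi^\perp$; $\omega^1,\dots,\omega^{2n},\Theta$ denote the forms along $U$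 dual to $e_1,\dots,e_{2n},T$, and $\cdot|_M$ denotes pullback to $M$. *)

(* Defs.v *)
From HB Require Import structures.
From mathcomp Require Import all_boot all_order all_algebra.
From mathcomp Require Import all_classical all_reals all_analysis.
From mathcomp Require Import complex.
Set Implicit Arguments. Unset Strict Implicit. Unset Printing Implicit Defensive.
Import Order.TTheory GRing.Theory Num.Theory.
Import numFieldNormedType.Exports.
Local Open Scope classical_set_scope.
Local Open Scope ring_scope.

(* Points / tangent vectors of H_n = R^(2n+1); 0-based coordinates:
   x_b at index b, y_b at index n+b, t at index 2n  (b < n). *)
Definition pt (R : realType) (n : nat) := 'rV[R]_(n.*2.+1).

Section Heis.
Variables (R : realType) (n : nat).
Local Notation V := (pt R n).

Definition crd (v : V) (i : nat) : R := v ord0 (inord i).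
Definition xc (v : V) (b : nat) : R := crd v b.
Definition yc (v : V) (b : nat) : R := crd v (n + b).
Definition tc (v : V) : R := crd v n.*2.

Definition Tvec : V := \row_(i < n.*2.+1) (if val i == n.*2 then 1 else 0).

(* the frame e°_1..e°_{2n} at the point p (0-based index i < 2n):
   e°_b = d/dx_b + y_b d/dt,  e°_{n+b} = d/dy_b - x_b d/dt *)
Definition ecirc (p : V) (i : nat) : V :=
  if (i < n)%N then
    \row_(k < n.*2.+1) (if val k == i then 1 else if val k == n.*2 then yc p i else 0)
  else
    \row_(k < n.*2.+1) (if val k == i then 1 else if val k == n.*2 then - xc p (i - n) else 0).

Definition Theta (p v : V) : R :=
  tc v + \sum_(b < n) (xc p b * yc v b - yc p b * xc v b).

(* its exterior derivative dTheta = 2 sum_b dx_b /\ dy_b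
   (convention (a /\ b)(X,Y) = a(X) b(Y) - a(Y) b(X)) *)
Definition dTheta (X Y : V) : R :=
  2 * \sum_(b < n) (xc X b * yc Y b - yc X b * xc Y b).

(* J on xi_p : J e°_b = e°_{n+b}, J e°_{n+b} = - e°_b (meaningful for X in xi_p) *)
Definition Jop (p X : V) : V :=
  \sum_(b < n) (xc X b *: ecirc p (n + b) - yc X b *: ecirc p b).

Definition levi (p X Y : V) : R := dTheta X (Jop p Y).

(* adapted metric: e°_1..e°_{2n}, T orthonormal *)
Definition adapted (p v w : V) : R :=
  \sum_(b < n) (xc v b * xc w b + yc v b * yc w b) + Theta p v * Theta p w.

(* the contact distribution xi_p = ker Theta_p, spanned by the e°_i *)
Definition xi (p : V) : {vspace V} := <<[seq ecirc p i | i <- iota 0 n.*2]>>%VS.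

(* Hermitian extension of the Levi metric to xi (x) C; a complex vector
   X1 + i X2 is represented by the pair (X1, X2). *)
Definition leviC (p : V) (X Y : V * V) : R[i] :=
  ((levi p X.1 Y.1 + levi p X.2 Y.2)%:C + 'i * (levi p X.2 Y.1 - levi p X.1 Y.2)%:C)%C.

End Heis.

Definition is_chart (R : realType) (N k : nat) (M : set 'rV[R]_N) (p : 'rV[R]_N)
  (phi : 'rV[R]_k -> 'rV[R]_N) (u : 'rV[R]_k) (O : set 'rV[R]_k) : Prop :=
  [/\ open O, O u, phi u = p,
      (forall x, O x -> differentiable phi x /\ injective ('d phi x)) &
      [/\ (forall x y, O x -> O y -> phi x = phi y -> x = y),
      (exists W : set 'rV[R]_N, open W /\ phi @` O = M `&` W) &
      (forall x, O x -> forall eps : R, 0 < eps -> exists2 d : R, 0 < d &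
          forall y, O y -> `|phi y - phi x| < d -> `|y - x| < eps)]].

Definition tspace (R : realType) (N k : nat) (phi : 'rV[R]_k -> 'rV[R]_N) (u : 'rV[R]_k)
  : {vspace 'rV[R]_N} :=
  <<[seq ('d phi u) (delta_mx ord0 i) | i <- enum 'I_k]>>%VS.

Section Sub.
Variables (R : realType) (n m : nat).
Local Notation V := (pt R n).

Definition hxi (Tp : {vspace V}) (p : V) : {vspace V} := (Tp :&: xi p)%VS.

Definition pseudoherm_sub (M : set V) (Tsp : V -> {vspace V}) : Prop :=
  forall p, M p ->
    \dim (hxi (Tsp p) p) = m.*2 /\
    (forall v, v \in hxi (Tsp p) p -> Jop p v \in hxi (Tsp p) p).

Definition fundamental_field (M : set V) (Tsp : V -> {vspace V}) (nu : V -> V) : Prop :=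
  forall p, M p ->
    [/\ nu p \in xi p,
        (forall w, w \in hxi (Tsp p) p -> levi p (nu p) w = 0) &
        @Tvec R n + nu p \in Tsp p].

(* Darboux frame over U (0-based indices: e_i, i < 2n; j < m; m <= a < n) *)
Definition darboux_frame (U : set V) (Tsp : V -> {vspace V}) (e : V -> nat -> V) : Prop :=
  forall p, U p ->
    [/\ (forall i k, (i < n.*2)%N -> (k < n.*2)%N ->
           adapted p (e p i) (e p k) = (i == k)%:R),
        (forall i, (i < n.*2)%N -> e p i \in xi p),
        (forall b, (b < n)%N -> e p (n + b)%N = Jop p (e p b)),
        (forall j, (j < m)%N -> e p j \in hxi (Tsp p) p) &
        (forall a, (m <= a < n)%N -> forall w, w \in hxi (Tsp p) p ->
           levi p (e p a) w = 0)].

Definition dual_forms (U : set V) (e : V -> nat -> V) (om : V -> nat -> V -> R) : Prop :=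
  forall p, U p ->
    (forall i, (i < n.*2)%N -> forall (c : R) (v w : V),
        om p i (c *: v + w) = c * om p i v + om p i w) /\
    (forall i, (i < n.*2)%N ->
       (forall k, (k < n.*2)%N -> om p i (e p k) = (i == k)%:R) /\
       om p i (@Tvec R n) = 0).

Definition ehat (e : nat -> V) (k : nat) : V :=
  if (k < m)%N then e k else e (n + (k - m))%N.

Definition dual_coframe (U : set V) (Tsp : V -> {vspace V}) (e : V -> nat -> V)
  (nu : V -> V) (homh : V -> nat -> V -> R) (thh : V -> V -> R) : Prop :=
  forall p, U p ->
    [/\ (forall i, (i < m.*2)%N -> forall (c : R) (v w : V), v \in Tsp p -> w \in Tsp p ->
           homh p i (c *: v + w) = c * homh p i v + homh p i w),
        (forall (c : R) (v w : V), v \in Tsp p -> w \in Tsp p ->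
           thh p (c *: v + w) = c * thh p v + thh p w),
        (forall i k, (i < m.*2)%N -> (k < m.*2)%N -> homh p i (ehat (e p) k) = (i == k)%:R),
        (forall i, (i < m.*2)%N -> homh p i (@Tvec R n + nu p) = 0) &
        ((forall k, (k < m.*2)%N -> thh p (ehat (e p) k) = 0) /\ thh p (@Tvec R n + nu p) = 1)].

Definition thetaC (om : nat -> V -> R) (b : nat) (v : V) : R[i] :=
  ((om b v)%:C + 'i * (om (n + b)%N v)%:C)%C.
Definition thetahC (homh : nat -> V -> R) (j : nat) (v : V) : R[i] :=
  ((homh j v)%:C + 'i * (homh (m + j)%N v)%:C)%C.
Definition Za (e : nat -> V) (a : nat) : V * V :=
  ((2 : R)^-1 *: e a, - ((2 : R)^-1 *: e (n + a)%N)).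

End Sub.

(* Main.v *)
Require Import Defs.
From HB Require Import structures.
From mathcomp Require Import all_boot all_order all_algebra.
From mathcomp Require Import all_classical all_reals all_analysis.
From mathcomp Require Import complex ring lra zify.
Import Order.TTheory GRing.Theory Num.Theory.
Import numFieldNormedType.Exports.
Local Open Scope classical_set_scope.
Local Open Scope ring_scope.

Section LinAlg.
Variables (K : fieldType) (vT : vectType K).

Lemma lin0 (S : {vspace vT}) (g : vT -> K) :
  (forall c v w, v \in S -> w \in S -> g (c *: v + w) = c * g v + g w) -> g 0 = 0.
Proof.
move=> H; have := H 1 0 0 (mem0v _) (mem0v _).
rewrite scale1r addr0 mul1r => /(congr1 (fun x => x - g 0)).
by rewrite subrr addrK.
Qed.

Lemma lin_sum (S : {vspace vT}) (g : vT -> K) :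
  (forall c v w, v \in S -> w \in S -> g (c *: v + w) = c * g v + g w) ->
  forall (I : Type) (r : seq I) (c : I -> K) (w : I -> vT), (forall x, w x \in S) ->
  g (\sum_(x <- r) c x *: w x) = \sum_(x <- r) c x * g (w x).
Proof.
move=> H I r c w Hw; elim: r => [|x r IH]; first by rewrite !big_nil (@lin0 S g H).
rewrite !big_cons H ?IH //; apply: rpred_sum => y _; exact: rpredZ.
Qed.

Lemma dual_decomp (N : nat) (S : {vspace vT}) (W : nat -> vT) (f : nat -> vT -> K) :
  (\dim S <= N)%N ->
  (forall i, (i < N)%N -> forall c v w, v \in S -> w \in S -> f i (c *: v + w) = c * f i v + f i w) ->
  (forall k, (k < N)%N -> W k \in S) ->
  (forall i k, (i < N)%N -> (k < N)%N -> f i (W k) = (i == k)%:R) ->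
  forall v, v \in S -> v = \sum_(i < N) f i v *: W i.
Proof.
move=> hdim hlin hW hd v vS.
pose X := [tuple W i | i < N].
have XE : forall i : 'I_N, X`_i = W i by move=> i; rewrite nth_mktuple.
have key : forall (k : 'I_N -> K) (i : 'I_N),
    f i (\sum_(j < N) k j *: X`_j) = k i.
  move=> k i; rewrite (@lin_sum S _ (hlin i (ltn_ord i))); last by move=> j; rewrite XE hW.
  rewrite (bigD1 i) //= XE hd // eqxx mulr1 big1 ?addr0 // => j ji.
  rewrite XE hd //; have : (i : nat) != j by rewrite eq_sym.
  by move/negbTE => ->; rewrite mulr0.
have fr : free X.
  apply/freeP => k Hk i; have := key k i; rewrite Hk => <-.
  exact: (@lin0 S _ (hlin i (ltn_ord i))).
have sub : (<<X>> <= S)%VS.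
  apply/span_subvP => x /mapP [i _ ->]; exact: hW.
have eqS : <<X>>%VS = S.
  apply/eqP; rewrite -(geq_leqif (dimv_leqif_eq sub)).
  by move/eqP: fr => ->; rewrite size_tuple.
have vX : v \in <<X>>%VS by rewrite eqS.
have Hv := coord_span vX.
rewrite {1}Hv; apply: eq_bigr => i _; rewrite XE; congr (_ *: _).
by rewrite [in RHS]Hv key.
Qed.
End LinAlg.

Section Heis.
Variables (R : realType) (n : nat).
Local Notation V := (pt R n).

Lemma sum_delta N (F : nat -> R) (P : nat -> bool) b : (b < N)%N ->
  (forall i, (i < N)%N -> P i = (i == b)) -> \sum_(i < N) F i * (P i)%:R = F b.
Proof.
move=> hb hP; rewrite (bigD1 (Ordinal hb)) //= hP // eqxx mulr1 big1 ?addr0 //.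
move=> i; rewrite -val_eqE /= hP // => /negbTE ->; by rewrite mulr0.
Qed.

Lemma sum_nodelta N (F : nat -> R) (P : nat -> bool) :
  (forall i, (i < N)%N -> P i = false) -> \sum_(i < N) F i * (P i)%:R = 0.
Proof. by move=> hP; rewrite big1 // => i _; rewrite hP // mulr0. Qed.

Lemma crdD (c : R) (X Y : V) k : crd (c *: X + Y) k = c * crd X k + crd Y k.
Proof. by rewrite /crd !mxE. Qed.

Lemma crdB (c d : R) (X Y : V) k : crd (c *: X - d *: Y) k = c * crd X k - d * crd Y k.
Proof. by rewrite /crd !mxE. Qed.

Lemma crd_sum I (r : seq I) (F : I -> V) k : crd (\sum_(x <- r) F x) k = \sum_(x <- r) crd (F x) k.
Proof. by rewrite /crd summxE. Qed.

Lemma valinord N k : (k < N.+1)%N -> \val (@inord N k) = k.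
Proof. by move=> h; exact: inordK h. Qed.

Lemma crd_ecirc_lo (p : V) i k : (i < n)%N -> (k < n.*2.+1)%N ->
  crd (ecirc p i) k = if k == i then 1 else if k == n.*2 then yc p i else 0.
Proof. by move=> hi hk; rewrite /crd /ecirc hi mxE valinord. Qed.

Lemma crd_ecirc_hi (p : V) i k : (i < n)%N -> (k < n.*2.+1)%N ->
  crd (ecirc p (n + i)) k = if k == (n + i)%N then 1 else if k == n.*2 then - xc p i else 0.
Proof.
move=> hi hk; rewrite /crd /ecirc ifF ?mxE ?valinord ?addKn //; lia.
Qed.

Lemma xcJ (p Y : V) b : (b < n)%N -> xc (Jop p Y) b = - yc Y b.
Proof.
move=> hb; rewrite /xc /Jop crd_sum.
rewrite (eq_bigr (fun c : 'I_n => - (yc Y c * (c == b :> nat)%:R))); last first.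
  move=> c _; rewrite crdB crd_ecirc_hi ?crd_ecirc_lo //; try lia.
  rewrite ifF; last lia. rewrite ifF; last lia.
  rewrite [b == c]eq_sym; case: (c == b :> nat); rewrite /= ?ifF; try lia; ring.
rewrite sumrN (@sum_delta _ (fun c => yc Y c) (fun c => c == b) b hb) //.
Qed.

Lemma ycJ (p Y : V) b : (b < n)%N -> yc (Jop p Y) b = xc Y b.
Proof.
move=> hb; rewrite /yc /Jop crd_sum.
rewrite (eq_bigr (fun c : 'I_n => (xc Y c * (c == b :> nat)%:R))); last first.
  move=> c _; rewrite crdB crd_ecirc_hi ?crd_ecirc_lo //; try lia.
  have h1 : ((n + b)%N == n.*2) = false by lia.
  have hc := ltn_ord c.
  have h2 : ((n + b)%N == c) = false by lia.
  rewrite eqn_add2l [b == c]eq_sym h1 h2.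
  case: (c == b :> nat); rewrite /=; ring.
by rewrite (@sum_delta _ (fun c => xc Y c) (fun c => c == b) b hb).
Qed.

Definition L2 (X Y : V) : R := \sum_(b < n) (xc X b * xc Y b + yc X b * yc Y b).

Lemma leviE (p X Y : V) : levi p X Y = 2 * L2 X Y.
Proof.
rewrite /levi /dTheta /L2; congr (_ * _); apply: eq_bigr => b _.
rewrite xcJ ?ycJ //; ring.
Qed.

Lemma adaptedE (p X Y : V) : adapted p X Y = L2 X Y + Theta p X * Theta p Y.
Proof. by []. Qed.

Lemma L2lin (Y : V) c (X W : V) : L2 (c *: X + W) Y = c * L2 X Y + L2 W Y.
Proof.
rewrite /L2 mulr_sumr -big_split; apply: eq_bigr => b _.
rewrite /xc /yc !crdD /=; ring.
Qed.

Lemma L2sym X Y : L2 X Y = L2 Y X.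
Proof. by rewrite /L2; apply: eq_bigr => b _; ring. Qed.

Lemma Thetalin (p : V) c (X W : V) : Theta p (c *: X + W) = c * Theta p X + Theta p W.
Proof.
rewrite /Theta /tc crdD.
have -> : \sum_(b < n) (xc p b * yc (c *: X + W) b - yc p b * xc (c *: X + W) b)
  = c * \sum_(b < n) (xc p b * yc X b - yc p b * xc X b) +
    \sum_(b < n) (xc p b * yc W b - yc p b * xc W b).
  rewrite mulr_sumr -big_split /=; apply: eq_bigr => b _.
  rewrite /xc /yc !crdD; ring.
ring.
Qed.

Lemma Theta_ecirc (p : V) i : (i < n.*2)%N -> Theta p (ecirc p i) = 0.
Proof.
move=> hi; have d2 : n.*2 = (n + n)%N by rewrite addnn.
rewrite /Theta /tc; case: (ltnP i n) => hin.
  rewrite crd_ecirc_lo //; try lia.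
  have h0 : (n.*2 == i) = false by apply/eqP; lia.
  rewrite h0 eqxx.
  rewrite (eq_bigr (fun b : 'I_n => - (yc p b * (b == i :> nat)%:R))); last first.
    move=> b _; have hb := ltn_ord b.
    rewrite /xc /yc !crd_ecirc_lo //; try lia.
    have h1 : ((n + b)%N == i) = false by lia.
    have h2 : ((n + b)%N == n.*2) = false by lia.
    have h3 : ((b : nat) == n.*2) = false by lia.
    rewrite h1 h2 h3; case: (b == i :> nat); rewrite /=; ring.
  rewrite sumrN (@sum_delta _ (fun c => yc p c) (fun c => c == i) i hin) //; ring.
have [i' ei] : exists i', i = (n + i')%N by exists (i - n)%N; lia.
have hi' : (i' < n)%N by lia.
rewrite ei crd_ecirc_hi //; try lia.
have h0 : (n.*2 == (n + i')%N) = false by lia.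
rewrite h0 eqxx.
rewrite (eq_bigr (fun b : 'I_n => (xc p b * (b == i' :> nat)%:R))); last first.
  move=> b _; have hb := ltn_ord b.
  rewrite /xc /yc !crd_ecirc_hi //; try lia.
  have h2 : ((n + b)%N == n.*2) = false by lia.
  have h3 : ((b : nat) == n.*2) = false by lia.
  have h4 : ((b : nat) == (n + i')%N) = false by lia.
  rewrite eqn_add2l h2 h3 h4; case: (b == i' :> nat); rewrite /=; ring.
rewrite (@sum_delta _ (fun c => xc p c) (fun c => c == i') i' hi') //; ring.
Qed.

Lemma L2Z (X : V) c (Y : V) : L2 X (c *: Y) = c * L2 X Y.
Proof.
rewrite /L2 mulr_sumr; apply: eq_bigr => b _.
rewrite /xc /yc /crd !mxE; ring.
Qed.

Lemma L2N (X Y : V) : L2 X (- Y) = - L2 X Y.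
Proof. by rewrite -scaleN1r L2Z mulN1r. Qed.

Lemma L20 (Y : V) : L2 0 Y = 0.
Proof. by rewrite /L2 big1 // => b _; rewrite /xc /yc /crd !mxE !mul0r addr0. Qed.

Lemma Theta_xi (p v : V) : v \in xi p -> Theta p v = 0.
Proof.
move=> hv.
pose s := [seq ecirc p i | i <- iota 0 n.*2].
have hv' : v \in <<in_tuple s>>%VS by [].
rewrite (coord_span hv').
rewrite (@lin_sum _ _ fullv (Theta p)); last first.
- by move=> x; rewrite memvf.
- by move=> c x w _ _; rewrite Thetalin.
rewrite big1 // => i _.
have : (in_tuple s)`_i \in s by apply: mem_nth; exact: ltn_ord.
case/mapP => k; rewrite mem_iota add0n => /andP [_ hk] ->.
by rewrite Theta_ecirc // mulr0.
Qed.

End Heis.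
Arguments L2 {R n}.

Theorem proposition3p2 (R : realType) (n m : nat) (hmn : (m <= n)%N)
  (M : set (pt R n))
  (phi : pt R n -> 'rV[R]_(m.*2.+1) -> pt R n) (u : pt R n -> 'rV[R]_(m.*2.+1))
  (O : pt R n -> set 'rV[R]_(m.*2.+1))
  (Hchart : forall p, M p -> is_chart M p (phi p) (u p) (O p))
  (Hpsh : pseudoherm_sub m M (fun p => tspace (phi p) (u p)))
  (nu : pt R n -> pt R n)
  (Hnu : fundamental_field M (fun p => tspace (phi p) (u p)) nu)
  (U : set (pt R n)) (HUM : U `<=` M)
  (HUo : exists W : set (pt R n), open W /\ U = M `&` W)
  (e : pt R n -> nat -> pt R n)
  (He : darboux_frame m U (fun p => tspace (phi p) (u p)) e)
  (om : pt R n -> nat -> pt R n -> R) (Hom : dual_forms U e om)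
  (homh : pt R n -> nat -> pt R n -> R) (thh : pt R n -> pt R n -> R)
  (Hhat : dual_coframe m U (fun p => tspace (phi p) (u p)) e nu homh thh) :
  forall p, U p -> forall v, v \in tspace (phi p) (u p) ->
    [/\ (forall j, (j < m)%N ->
           om p j v = homh p j v /\ om p (n + j)%N v = homh p (m + j)%N v),
        (forall a, (m <= a < n)%N ->
           om p a v = 2^-1 * levi p (nu p) (e p a) * thh p v /\
           om p (n + a)%N v = 2^-1 * levi p (nu p) (e p (n + a)%N) * thh p v),
        (forall j, (j < m)%N -> thetaC (om p) j v = thetahC m (homh p) j v),
        (forall a, (m <= a < n)%N ->
           thetaC (om p) a v = leviC p (nu p, 0) (Za (e p) a) * (thh p v)%:C%C) &
        (nu p = 0 -> forall a, (m <= a < n)%N -> thetaC (om p) a v = 0)].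
Proof.
move=> p Up v Hv.
have Mp := HUM p Up.
have [orth exi eJ ehxi eperp] := He p Up.
have [omlin omdual] := Hom p Up.
have [hlin tlin hdual hT [tdual tT]] := Hhat p Up.
have [nuxi nuperp Tnu] := Hnu p Mp.
have [_ Jinv] := Hpsh p Mp.
have hxiT : forall w, w \in hxi (tspace (phi p) (u p)) p -> w \in (tspace (phi p) (u p)) by move=> w /memv_capP [].
have ehxi2 : forall j, (j < m)%N -> e p (n + j)%N \in hxi (tspace (phi p) (u p)) p.
  by move=> j hj; rewrite eJ; [apply: Jinv; apply: ehxi | lia].
have ehat_hxi : forall k, (k < m.*2)%N -> ehat m (e p) k \in hxi (tspace (phi p) (u p)) p.
  move=> k hk; rewrite /ehat; case: ifP => hkm; first exact: ehxi.
  apply: ehxi2; lia.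
have eTh : forall k, (k < n.*2)%N -> Theta p (e p k) = 0.
  by move=> k hk; apply: Theta_xi; apply: exi.
have L2e : forall k i, (k < n.*2)%N -> (i < n.*2)%N -> L2 (e p k) (e p i) = (k == i)%:R.
  move=> k i hk hi; have := orth k i hk hi.
  by rewrite adaptedE !eTh // mul0r addr0.
have L2nu0 : forall w, w \in hxi (tspace (phi p) (u p)) p -> L2 (nu p) w = 0.
  move=> w hw; have h := nuperp w hw; rewrite leviE in h; lra.
have dimxi : (\dim (xi p) <= n.*2)%N.
  rewrite /xi; apply: leq_trans (dim_span _) _; by rewrite size_map size_iota.
have nuE := @dual_decomp _ _ n.*2 (xi p) (e p) (om p) dimxi
   (fun i hi c v w _ _ => omlin i hi c v w) exi
   (fun i k hi hk => (omdual i hi).1 k hk) (nu p) nuxi.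
have omnu : forall i, (i < n.*2)%N -> om p i (nu p) = L2 (nu p) (e p i).
  move=> i hi; rewrite [in RHS]nuE.
  rewrite (@lin_sum _ _ fullv (fun x => L2 x (e p i))); last first.
  - by move=> x; rewrite memvf.
  - by move=> c x w _ _; rewrite L2lin.
  rewrite (eq_bigr (fun k : 'I_n.*2 => om p k (nu p) * (k == i :> nat)%:R)); last first.
    by move=> k _; rewrite L2e.
  by rewrite (@sum_delta _ _ (fun k => om p k (nu p)) (fun k => k == i) i hi).
have dimT : (\dim (tspace (phi p) (u p)) <= m.*2.+1)%N.
  rewrite /tspace; apply: leq_trans (dim_span _) _; by rewrite size_map size_enum_ord.
pose W := fun k => if (k < m.*2)%N then ehat m (e p) k else Tvec R n + nu p.
pose f := fun i => if (i < m.*2)%N then homh p i else thh p.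
have hlin' : forall i, (i < m.*2.+1)%N -> forall c x w,
    x \in tspace (phi p) (u p) -> w \in tspace (phi p) (u p) ->
    f i (c *: x + w) = c * f i x + f i w.
  move=> i hi c x w hx hw; rewrite /f; case: ifP => h; [exact: hlin | exact: tlin].
have hW' : forall k, (k < m.*2.+1)%N -> W k \in tspace (phi p) (u p).
  move=> k hk; rewrite /W; case: ifP => h; [apply: hxiT; exact: ehat_hxi | exact: Tnu].
have hd' : forall i k, (i < m.*2.+1)%N -> (k < m.*2.+1)%N -> f i (W k) = (i == k)%:R.
  move=> i k hi hk; rewrite /f /W; case: ifP => h1; case: ifP => h2.
  - exact: hdual.
  - rewrite hT //; have -> : (i == k) = false by apply/eqP; lia. by [].
  - rewrite tdual //; have -> : (i == k) = false by apply/eqP; lia. by [].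
  - rewrite tT; have -> : (i == k) by apply/eqP; lia. by [].
have vE := @dual_decomp _ _ m.*2.+1 (tspace (phi p) (u p)) W f dimT hlin' hW' hd' v Hv.
pose idx := fun i => if (i < m)%N then i else (n + (i - m))%N.
have key : forall r, (r < n.*2)%N -> om p r v =
   \sum_(i < m.*2) homh p i v * (r == idx i)%:R + thh p v * om p r (nu p).
  move=> r hr; rewrite {1}vE.
  rewrite (@lin_sum _ _ fullv (om p r)); last first.
  - by move=> x; rewrite memvf.
  - by move=> c x w _ _; apply: omlin.
  rewrite big_ord_recr /= /f /W ltnn; congr (_ + _).
    apply: eq_bigr => i _; rewrite ltn_ord; congr (_ * _).
    have hi := ltn_ord i; rewrite /ehat /idx; case: ifP => h; apply: (omdual r hr).1; lia.
  have := omlin r hr 1 (Tvec R n) (nu p); rewrite scale1r (omdual r hr).2 mulr0 add0r => ->.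
  by [].
have beq : forall (x y z w : nat), (x = y <-> z = w) -> (x == y) = (z == w).
  by move=> x y z w [h1 h2]; apply/idP/idP => /eqP ?; apply/eqP; auto.
have omj : forall j, (j < m)%N -> om p j v = homh p j v.
  move=> j hj; rewrite key; last lia.
  have -> : \sum_(i < m.*2) homh p i v * (j == idx i)%:R = homh p j v.
    apply: (@sum_delta _ _ (fun i => homh p i v) (fun i => j == idx i) j); first lia.
    move=> i hi; rewrite /idx; case: ifP => h; apply: beq; lia.
  rewrite omnu; last lia.
  by rewrite L2nu0 ?mulr0 ?addr0 //; exact: ehxi.
have omnj : forall j, (j < m)%N -> om p (n + j)%N v = homh p (m + j)%N v.
  move=> j hj; rewrite key; last lia.
  have -> : \sum_(i < m.*2) homh p i v * ((n + j)%N == idx i)%:R = homh p (m + j)%N v.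
    apply: (@sum_delta _ _ (fun i => homh p i v) (fun i => (n + j)%N == idx i) (m + j)%N); first lia.
    move=> i hi; rewrite /idx; case: ifP => h; apply: beq; lia.
  rewrite omnu; last lia.
  by rewrite L2nu0 ?mulr0 ?addr0 //; exact: ehxi2.
have oma : forall q, (m <= q < n)%N -> om p q v = 2^-1 * levi p (nu p) (e p q) * thh p v.
  move=> q ha; rewrite key; last lia.
  rewrite (@sum_nodelta _ _ (fun i => homh p i v) (fun i => q == idx i)); last first.
    move=> i hi; rewrite /idx; case: ifP => h; apply/eqP; lia.
  rewrite omnu; last lia.
  by by rewrite leviE add0r; field.
have omna : forall q, (m <= q < n)%N ->
    om p (n + q)%N v = 2^-1 * levi p (nu p) (e p (n + q)%N) * thh p v.
  move=> q ha; rewrite key; last lia.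
  rewrite (@sum_nodelta _ _ (fun i => homh p i v) (fun i => (n + q)%N == idx i)); last first.
    move=> i hi; rewrite /idx; case: ifP => h; apply/eqP; lia.
  rewrite omnu; last lia.
  by rewrite leviE add0r; field.
have cplx : forall x y z : R, ((x * z)%:C + 'i * (y * z)%:C)%C = ((x%:C + 'i * y%:C) * z%:C)%C.
  by move=> x y z; rewrite mulrDl -mulrA !rmorphM.
have part4 : forall q, (m <= q < n)%N ->
    thetaC (om p) q v = leviC p (nu p, 0) (Za (e p) q) * (thh p v)%:C%C.
  move=> q ha; rewrite /thetaC oma // omna // /leviC /Za /= !leviE !L2N !L2Z !L20.
  rewrite cplx; f_equal; f_equal; [f_equal | f_equal; f_equal]; ring.
split.
- by move=> j hj; split; [apply: omj | apply: omnj].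
- by move=> q ha; split; [apply: oma | apply: omna].
- by move=> j hj; rewrite /thetaC /thetahC omj // omnj.
- exact: part4.
- move=> nu0 q ha; rewrite /thetaC oma // omna // nu0 !leviE !L20 !mulr0 !mul0r.
  by rewrite rmorph0 mulr0 addr0.
Qed.
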